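(* Fix a single machine with nonnegative real parameters $k^A,k^B,t^A,t^B$, a real bound $L$ and nonnegative integers $n_a,n_b$. For $0\le a\le n_a$, $0\le b\le n_b$ let $F(a,b)=1$ if $f(a,b)\le L$ and $F(a,b)=0$ otherwise, where $f$ is as in the context. Then, whenever all entries of $F$ mentioned below lie in the range $0\le a\le n_a$, $0\le b\le n_b$: (1) if $b\le a+1$ and $F(a,b)=0$, then $F(a+1,b)=0$; (2) if $b\ge a+1$ and $F(a,b)=0$, then $F(a,b+1)=0$; (3) if $F(a,a+1)=0$, then $F(a+1,a+2)=0$; (4) if $F(a+1,a+1)=0$ and $F(a+1,a+2)=1$, then $F(a,a+1)=1$.
   Context: A machine processes jobs of two types, A and B, in batches. A schedule for the task-combination $(a,b)$ is a finite sequence of batches, each a nonempty group of jobs of a single type, with consecutive batches of different types, processing exactly $a$ A-jobs and $b$ B-jobs in total. An A-batch of $x$ jobs takes $t^A+k^A x^2$ time units, a B-batch of $x$ jobs takes $t^B+k^B x^2$ time units; the time of a schedule is the sum of its batch times (empty schedule: time $0$). $f(a,b)$ is the minimum time over all schedules for $(a,b)$. *)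

(* Defs.v *)
From HB Require Import structures.
From mathcomp Require Import all_boot all_order all_algebra.
From mathcomp Require Import boolp classical_sets reals.
Set Implicit Arguments. Unset Strict Implicit. Unset Printing Implicit Defensive.
Import Order.TTheory GRing.Theory Num.Theory.
Local Open Scope ring_scope.
Local Open Scope classical_set_scope.

(* A batch is (typ, x): typ = true for an A-batch, false for a B-batch;
   x = number of jobs in it.  A schedule is a finite sequence of batches. *)
Definition batch := (bool * nat)%type.

Definition is_schedule (a b : nat) (s : seq batch) : Prop :=
  [/\ all (fun x => 0 < x.2)%N s,
      sorted (fun x y : batch => x.1 != y.1) s,
      sumn [seq x.2 | x <- s & x.1] = a
    & sumn [seq x.2 | x <- s & ~~ x.1] = b].

Section Machine.
Variables (R : realType) (kA kB tA tB : R).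

Definition batch_time (x : batch) : R :=
  if x.1 then tA + kA * (x.2%:R) ^+ 2 else tB + kB * (x.2%:R) ^+ 2.

Definition sched_time (s : seq batch) : R := \sum_(x <- s) batch_time x.

(* f(a,b): minimum time over all schedules for (a,b); the set of schedules
   is finite and nonempty, so the minimum is its infimum. *)
Definition fmin (a b : nat) : R :=
  inf [set sched_time s | s in is_schedule a b].

Definition Fb (L : R) (a b : nat) : bool := fmin a b <= L.
End Machine.

(* Main.v *)
Require Import Defs.
From HB Require Import structures.
From mathcomp Require Import all_boot all_order all_algebra.
From mathcomp Require Import boolp classical_sets reals.
From mathcomp Require Import zify.
Import Order.TTheory GRing.Theory Num.Theory.
Local Open Scope ring_scope.

Definition altb := fun u v : bool => u != v.
Definition altr := fun x y : batch => x.1 != y.1.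
Definition NN (t : bool) (s : seq batch) : nat := sumn [seq x.2 | x <- s & x.1 == t].
Definition posb (s : seq batch) := all (fun x : batch => 0 < x.2)%N s.

Lemma sorted_fst s : sorted altr s = sorted altb (map fst s).
Proof. by rewrite sorted_map. Qed.

Lemma count_alt (q : seq bool) (b : bool) : sorted altb (b :: q) ->
  count (pred1 b) (b :: q) = (count (pred1 (~~ b)) (b :: q) + (last b q == b))%N.
Proof.
elim: q b => [|c q IH] b /=; first by case: b.
move=> /andP [hbc hp].
have hc : c = ~~ b by move: hbc; rewrite /altb; destruct b, c.
have := IH c hp. subst c. rewrite /= negbK.
destruct b; simpl; destruct (last _ q); simpl; lia.
Qed.

Lemma NN_cons t x s : NN t (x :: s) = ((if x.1 == t then x.2 else 0) + NN t s)%N.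
Proof. by rewrite /NN /=; case: (x.1 == t). Qed.

Lemma NN_rcons t x s : NN t (rcons s x) = (NN t s + (if x.1 == t then x.2 else 0))%N.
Proof.
elim: s => [|y s IH] /=; first by rewrite /NN /=; case: (x.1 == t) => /=; lia.
rewrite !NN_cons IH; lia.
Qed.

Lemma NN_count t s : posb s -> (NN t s >= count (pred1 t) (map fst s))%N.
Proof.
elim: s => [|x s IH] //= /andP [hx hs]; rewrite NN_cons.
have := IH hs; case: (x.1 == t) => /=; lia.
Qed.

Lemma NN_count1 t s : posb s -> (forall x, x \in s -> x.1 = t -> (x.2 <= 1)%N) ->
  NN t s = count (pred1 t) (map fst s).
Proof.
elim: s => [|x s IH] //= /andP [hx hs] H; rewrite NN_cons.
rewrite IH //; last by move=> y hy; apply: H; rewrite inE hy orbT.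
case: eqP => //= e. have := H x (mem_head _ _) e. lia.
Qed.

Section Red.
Variables (R : realType) (kA kB tA tB : R).
Hypotheses (hkA : 0 <= kA) (hkB : 0 <= kB) (htA : 0 <= tA) (htB : 0 <= tB).
Local Notation time := (sched_time kA kB tA tB).
Local Notation bt := (batch_time kA kB tA tB).

Lemma bt_ge0 x : 0 <= bt x.
Proof. rewrite /batch_time; case: x.1; apply: addr_ge0 => //; apply: mulr_ge0 => //; exact: sqr_ge0. Qed.

Lemma bt_le t m n : (m <= n)%N -> bt (t, m) <= bt (t, n).
Proof.
move=> hmn; rewrite /batch_time /=; case: t; rewrite lerD2l; apply: ler_wpM2l => //;
  by rewrite -!natrX ler_nat leq_sqr.
Qed.

Lemma time_cons x s : time (x :: s) = bt x + time s.
Proof. by rewrite /sched_time big_cons. Qed.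

Lemma time_rcons x s : time (rcons s x) = time s + bt x.
Proof. by rewrite /sched_time -cats1 big_cat big_seq1. Qed.

Lemma time_ge0 s : 0 <= time s.
Proof. rewrite /sched_time; elim: s => [|x s IH]; rewrite ?big_nil ?big_cons //; exact: addr_ge0 (bt_ge0 _) IH. Qed.

Definition good t s s' :=
  [/\ posb s', sorted altr s', (NN t s' + 1 = NN t s)%N,
      NN (~~ t) s' = NN (~~ t) s & time s' <= time s].

Lemma red1 t s : posb s -> (exists2 x, x \in s & x.1 = t /\ (2 <= x.2)%N) ->
  exists s', [/\ map fst s' = map fst s, posb s', (NN t s' + 1 = NN t s)%N,
      NN (~~ t) s' = NN (~~ t) s & time s' <= time s].
Proof.
elim: s => [|y s IH] /=; first by move=> _ [x].
move=> /andP [hy hs] [x]; rewrite inE => /orP [/eqP ex [ht h2]|hx hxt].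
  subst x.
  exists ((t, y.2.-1) :: s); rewrite /= ht; split => //.
  - by move: hs; rewrite /posb /= => ->; rewrite andbT; lia.
  - rewrite !NN_cons /= ht eqxx; lia.
  - rewrite !NN_cons /= ht; have -> : (t == ~~ t) = false by destruct t. done.
  - rewrite !time_cons lerD2r -ht; case: y {hy hs} h2 ht => u n /= h2 ht; apply: bt_le; lia.
have [s' [e1 e2 e3 e4 e5]] := IH hs (ex_intro2 _ _ x hx hxt).
exists (y :: s'); split => //=.
- by rewrite e1.
- by rewrite hy.
- rewrite !NN_cons -e3; lia.
- by rewrite !NN_cons e4.
- by rewrite !time_cons lerD2l.
Qed.

Lemma red1g t s : posb s -> sorted altr s -> (exists2 x, x \in s & x.1 = t /\ (2 <= x.2)%N) ->
  exists s', good t s s'.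
Proof.
move=> hp hs hx; have [s' [e1 e2 e3 e4 e5]] := red1 t s hp hx.
by exists s'; split => //; rewrite sorted_fst e1 -sorted_fst.
Qed.

Lemma red_head t x s : posb (x :: s) -> sorted altr (x :: s) -> x.1 = t ->
  exists s', good t (x :: s) s'.
Proof.
move=> hp hs hxt; case: (leqP 2 x.2) => h2.
  by apply: red1g => //; exists x; rewrite ?mem_head.
move: hp => /= /andP [hx hp].
exists s; split => //.
- exact: path_sorted hs.
- rewrite NN_cons hxt eqxx; lia.
- rewrite NN_cons; have -> : (x.1 == ~~ t) = false by rewrite hxt; destruct t. done.
- by rewrite time_cons lerDr bt_ge0.
Qed.

Lemma posb_rcons s x : posb (rcons s x) = posb s && (0 < x.2)%N.
Proof. by rewrite /posb all_rcons andbC. Qed.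

Lemma sorted_rcons_l s x : sorted altr (rcons s x) -> sorted altr s.
Proof. case: s => [|y s] //=; rewrite rcons_path => /andP []; done. Qed.

Lemma red_last t x s : posb (rcons s x) -> sorted altr (rcons s x) -> x.1 = t ->
  exists s', good t (rcons s x) s'.
Proof.
move=> hp hs hxt; case: (leqP 2 x.2) => h2.
  by apply: red1g => //; exists x; rewrite ?mem_rcons ?mem_head.
move: hp; rewrite posb_rcons => /andP [hp hx].
exists s; split => //.
- exact: sorted_rcons_l hs.
- rewrite NN_rcons hxt eqxx; lia.
- rewrite NN_rcons; have -> : (x.1 == ~~ t) = false by rewrite hxt; destruct t. lia.
- by rewrite time_rcons lerDl bt_ge0.
Qed.

Lemma reduce t s : posb s -> sorted altr s -> (0 < NN t s)%N ->
  (NN (~~ t) s <= NN t s)%N -> exists s', good t s s'.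
Proof.
move=> hp hs h0 hle.
have [[x [hx [ht h2]]]|hno] := pselect (exists x, [/\ x \in s, x.1 = t & (2 <= x.2)%N]).
  by apply: red1g => //; exists x.
have h1 : forall x, x \in s -> x.1 = t -> (x.2 <= 1)%N.
  move=> x hx hxt; case: (leqP x.2 1) => // h; exfalso; apply: hno; by exists x.
case: s hp hs h0 hle hno h1 => [|x s0]; first by rewrite /NN.
move=> hp hs h0 hle _ h1.
case: (boolP (x.1 == t)) => [/eqP hxt|hxt]; first exact: red_head hxt.
case: (boolP ((last x s0).1 == t)) => [/eqP hlt|hlt].
  move: hp hs; rewrite (lastI x s0) => hp hs; exact: red_last hlt.
exfalso.
have hx1 : x.1 = ~~ t by move: hxt; destruct x.1, t.
have hl1 : (last x s0).1 = ~~ t by move: hlt; destruct (last x s0).1, t.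
have hc := count_alt (map fst s0) x.1.
rewrite -map_cons -sorted_fst in hc; have := hc hs.
rewrite (last_map fst s0 x) hl1 hx1 eqxx negbK /= => hc'.
have := NN_count1 t (x :: s0) hp h1; have := NN_count (~~ t) (x :: s0) hp.
rewrite hx1 /= in hc' *. move: hle hc'; rewrite hx1; destruct t; simpl; move=> q1 q2 q3 q4; rewrite q4 in q1; rewrite q2 in q3; change (prod bool nat) with batch in *; lia.
Qed.
End Red.

Lemma is_schedule_iff a b s : is_schedule a b s <->
  [/\ posb s, sorted altr s, NN true s = a & NN false s = b].
Proof.
have e1 : NN true s = sumn [seq x.2 | x <- s & x.1].
  by rewrite /NN; congr (sumn (map _ _)); apply: eq_filter => x; rewrite eqb_id.
have e2 : NN false s = sumn [seq x.2 | x <- s & ~~ x.1].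
  by rewrite /NN; congr (sumn (map _ _)); apply: eq_filter => x; rewrite eqbF_neg.
by rewrite e1 e2; split; case.
Qed.

Lemma sched_exists a b : exists s, is_schedule a b s.
Proof.
exists [seq x <- [:: (true, a); (false, b)] | (0 < x.2)%N].
by case: a => [|a]; case: b => [|b]; split => //=; rewrite ?addn0.
Qed.

Section F.
Variables (R : realType) (kA kB tA tB : R).
Hypotheses (hkA : 0 <= kA) (hkB : 0 <= kB) (htA : 0 <= tA) (htB : 0 <= tB).
Local Notation time := (sched_time kA kB tA tB).
Local Notation f := (fmin kA kB tA tB).

Lemma fmin_le a b s : is_schedule a b s -> f a b <= time s.
Proof.
move=> hs; apply: ge_inf; last by exists s.
exists 0 => y [s' _ <-]; exact: time_ge0 hkA hkB htA htB s'.
Qed.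

Lemma fmono a1 b1 a2 b2 :
  (forall s, is_schedule a2 b2 s -> f a1 b1 <= time s) -> f a1 b1 <= f a2 b2.
Proof.
move=> H; apply: lb_le_inf.
  by have [s hs] := sched_exists a2 b2; exists (time s), s.
by move=> y [s hs <-]; apply: H.
Qed.

Lemma mA a b : (b <= a + 1)%N -> f a b <= f (a + 1)%N b.
Proof.
move=> hb; apply: fmono => s /is_schedule_iff [hp hs e1 e2].
have [||s' [p1 p2 p3 p4 p5]] := (@reduce R kA kB tA tB hkA hkB htA htB true s hp hs); rewrite ?e1 ?e2 //; try lia.
apply: le_trans p5; apply: fmin_le; apply/is_schedule_iff; split => //; last by rewrite p4.
move: p3; rewrite e1; lia.
Qed.

Lemma mB a b : (a <= b + 1)%N -> f a b <= f a (b + 1)%N.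
Proof.
move=> hb; apply: fmono => s /is_schedule_iff [hp hs e1 e2].
have [||s' [p1 p2 p3 p4 p5]] := (@reduce R kA kB tA tB hkA hkB htA htB false s hp hs); rewrite /= ?e1 ?e2 //; try lia.
apply: le_trans p5; apply: fmin_le; apply/is_schedule_iff; split => //; first by rewrite p4.
move: p3; rewrite e2; lia.
Qed.

Lemma m3 a : f a (a + 1)%N <= f (a + 1)%N (a + 2)%N.
Proof.
apply: fmono => s /is_schedule_iff [hp hs e1 e2].
have [||s' [p1 p2 p3 p4 p5]] := (@reduce R kA kB tA tB hkA hkB htA htB false s hp hs); rewrite /= ?e1 ?e2 //; try lia.
apply: le_trans p5; apply: le_trans (mA a (a + 1)%N _) _ => //.
apply: fmin_le; apply/is_schedule_iff; split => //; first by rewrite p4.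
move: p3; rewrite e2; lia.
Qed.
End F.

Theorem lemma4 (R : realType) (kA kB tA tB L : R) (na nb : nat)
  (hkA : 0 <= kA) (hkB : 0 <= kB) (htA : 0 <= tA) (htB : 0 <= tB) :
  let F := Fb kA kB tA tB L in
  [/\ (forall a b : nat, (a + 1 <= na)%N -> (b <= nb)%N ->
         (b <= a + 1)%N -> F a b = false -> F (a + 1)%N b = false),
      (forall a b : nat, (a <= na)%N -> (b + 1 <= nb)%N ->
         (a + 1 <= b)%N -> F a b = false -> F a (b + 1)%N = false),
      (forall a : nat, (a + 1 <= na)%N -> (a + 2 <= nb)%N ->
         F a (a + 1)%N = false -> F (a + 1)%N (a + 2)%N = false)
    & (forall a : nat, (a + 1 <= na)%N -> (a + 2 <= nb)%N ->
         F (a + 1)%N (a + 1)%N = false -> F (a + 1)%N (a + 2)%N = true ->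
         F a (a + 1)%N = true)].
Proof.
move=> F; rewrite /F /Fb; split.
- move=> a b _ _ hb /negbT; rewrite -ltNge => h; apply/negbTE; rewrite -ltNge.
  exact: lt_le_trans h (@mA R kA kB tA tB hkA hkB htA htB _ _ hb).
- move=> a b _ _ hb /negbT; rewrite -ltNge => h; apply/negbTE; rewrite -ltNge.
  apply: lt_le_trans h (@mB R kA kB tA tB hkA hkB htA htB a b _); move: hb; lia.
- move=> a _ _ /negbT; rewrite -ltNge => h; apply/negbTE; rewrite -ltNge.
  exact: lt_le_trans h (@m3 R kA kB tA tB hkA hkB htA htB a).
- move=> a _ _ _ h; exact: le_trans (@m3 R kA kB tA tB hkA hkB htA htB a) h.
Qed.
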